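(* With notation as in the context (type $E_7$), let $s\in\{1,3,4,5,6,7\}$ and let $\beta\neq\beta'$ be elements of $\Delta_s^+$. Then $(f(\beta)|f(\beta'))=0$ if and only if $f(\beta)$ and $f(\beta')$ agree in exactly one of their three coordinates. In particular, $\langle\beta,\beta'\rangle=0$ if and only if $f(\beta)$ and $f(\beta')$ agree in exactly one coordinate.
   Context: Let $F=\{0,1,2,3\}$ be the group $\mathbb{Z}/2\times\mathbb{Z}/2$ with operation $\oplus$ (binary addition without carry) and symplectic form $(a|a')=0$ if $a=0$, $a'=0$ or $a=a'$, and $1$ otherwise. Let $V=F^3$ (elements written $abc$), with coordinatewise $\oplus$ and form $(abc|a'b'c')=(a|a')+(b|b')+(c|c')\in\mathbb{Z}/2$. Let $\Delta$ be the $E_7$ root system with simple roots $\alpha_1,\dots,\alpha_7$, $\langle\alpha_i,\alpha_i\rangle=2$, $\langle\alpha_i,\alpha_j\rangle=-1$ for $\{i,j\}\in\{\{1,3\},\{3,4\},\{4,5\},\{5,6\},\{6,7\},\{2,4\}\}$, $0$ otherwise; $\Lambda=\bigoplus\mathbb{Z}\alpha_i$, $\Delta^+$ the positive roots. Let $f:\Lambda\to V$ be the homomorphism with $f(\alpha_1)=100$, $f(\alpha_2)=030$, $f(\alpha_3)=300$, $f(\alpha_4)=111$, $f(\alpha_5)=003$, $f(\alpha_6)=001$, $f(\alpha_7)=033$. For $\beta=\sum\beta^i\alpha_i\in\Delta^+$ let $m(\beta)=\max\{i:\beta^i\ne0\}$. The strata are $\Delta_1^+=\{\alpha_1\}$,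 $\Delta_3^+=\{\beta\in\Delta^+: m(\beta)\in\{2,3\}\}$, and $\Delta_s^+=\{\beta\in\Delta^+: m(\beta)=s\}$ for $s=4,5,6,7$. *)

(* Defs.v *)
From Stdlib Require Import PeanoNat.
From mathcomp Require Import all_boot all_order all_algebra.
Set Implicit Arguments. Unset Strict Implicit. Unset Printing Implicit Defensive.
Import Order.TTheory GRing.Theory Num.Theory.

(* Elements of F are encoded by the naturals 0,1,2,3; ⊕ is bitwise xor. *)
Definition Fadd (a b : nat) : nat := Nat.lxor a b.

Definition Fform (a b : nat) : nat :=
  if [|| a == 0%N, b == 0%N | a == b] then 0%N else 1%N.

Definition V := (nat * nat * nat)%type.
Definition Vc1 (x : V) : nat := x.1.1.
Definition Vc2 (x : V) : nat := x.1.2.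
Definition Vc3 (x : V) : nat := x.2.

Definition Vzero : V := (0%N, 0%N, 0%N).
Definition Vadd (x y : V) : V :=
  (Fadd (Vc1 x) (Vc1 y), Fadd (Vc2 x) (Vc2 y), Fadd (Vc3 x) (Vc3 y)).

Definition Vform (x y : V) : nat :=
  ((Fform (Vc1 x) (Vc1 y) + Fform (Vc2 x) (Vc2 y) + Fform (Vc3 x) (Vc3 y)) %% 2)%N.

Definition agree_count (x y : V) : nat :=
  ((Vc1 x == Vc1 y) + (Vc2 x == Vc2 y) + (Vc3 x == Vc3 y))%N.

(* An element beta = sum_i beta^i alpha_i of Lambda is its coefficient vector;
   the ordinal k : 'I_7 stands for the simple root alpha_(k+1). *)
Definition Lam := {ffun 'I_7 -> int}.

(* coefficient beta^i, with the paper's 1-based labels i = 1..7 *)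
Definition coef (b : Lam) (i : nat) : int := b (inord i.-1).

Definition cartan (i j : nat) : int :=
  if i == j then Posz 2
  else if (i, j) \in [:: (1,3); (3,4); (4,5); (5,6); (6,7); (2,4);
                          (3,1); (4,3); (5,4); (6,5); (7,6); (4,2)]%N
       then Negz 0 else Posz 0.

Definition lam_form (b c : Lam) : int :=
  (\sum_(1 <= i < 8) \sum_(1 <= j < 8) coef b i * coef c j * cartan i j)%R.

(* Delta = {beta in Lambda : <beta,beta> = 2} (E7 is simply laced);
   Delta^+ = roots with all coefficients nonnegative. *)
Definition pos_root (b : Lam) : Prop :=
  lam_form b b = Posz 2 /\ (forall i : 'I_7, (0 <= b i)%R).

Definition f_simple (i : nat) : V :=
  match i with
  | 1 => (1, 0, 0)
  | 2 => (0, 3, 0)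
  | 3 => (3, 0, 0)
  | 4 => (1, 1, 1)
  | 5 => (0, 0, 3)
  | 6 => (0, 0, 1)
  | 7 => (0, 3, 3)
  | _ => (0, 0, 0)
  end%N.

(* f(sum beta^i alpha_i) = ⊕_i beta^i f(alpha_i); since V has exponent 2,
   n * v = v if n is odd and 0 if n is even. *)
Definition zscale (n : int) (v : V) : V := if odd `|n|%N then v else Vzero.

Definition fmap (b : Lam) : V :=
  foldr (fun i acc => Vadd (zscale (coef b i) (f_simple i)) acc) Vzero (iota 1 7).

Definition mmax (b : Lam) : nat :=
  \max_(1 <= i < 8 | coef b i != 0%R) i.

Definition alpha1 : Lam := [ffun k : 'I_7 => if val k == 0%N then Posz 1 else Posz 0].

Definition in_stratum (s : nat) (b : Lam) : Prop :=
  pos_root b /\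
  (if s == 1%N then b = alpha1
   else if s == 3%N then (mmax b == 2%N) || (mmax b == 3%N)
   else mmax b == s).

(* Main.v *)
Require Import Defs.
From mathcomp Require Import all_boot all_order all_algebra.
From mathcomp Require Import zify ring.
Import Order.TTheory GRing.Theory Num.Theory.

Definition lamF (b c : Lam) : int :=
  foldr (fun i acc => (foldr (fun j acc' => coef b i * coef c j * cartan i j + acc') 0 (iota 1 7) + acc)%R) 0%R (iota 1 7).

Lemma lam_formE b c : lam_form b c = lamF b c.
Proof. by rewrite /lam_form unlock. Qed.

Definition mmaxF (b : Lam) : nat :=
  foldr (fun i acc => if coef b i != 0%R then maxn i acc else acc) 0%N (iota 1 7).

Lemma mmaxE b : mmax b = mmaxF b.
Proof. by rewrite /mmax unlock. Qed.

Definition mkL7 (a1 a2 a3 a4 a5 a6 a7 : nat) : Lam :=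
  [ffun k : 'I_7 => Posz (nth 0%N [:: a1; a2; a3; a4; a5; a6; a7] k)].

Lemma lamF7 a1 a2 a3 a4 a5 a6 a7 c1 c2 c3 c4 c5 c6 c7 :
  lamF (mkL7 a1 a2 a3 a4 a5 a6 a7) (mkL7 c1 c2 c3 c4 c5 c6 c7) =
  (2 * (a1%:Z*c1%:Z + a2%:Z*c2%:Z + a3%:Z*c3%:Z + a4%:Z*c4%:Z + a5%:Z*c5%:Z + a6%:Z*c6%:Z + a7%:Z*c7%:Z)
   - (a1%:Z*c3%:Z + a3%:Z*c1%:Z + a3%:Z*c4%:Z + a4%:Z*c3%:Z + a4%:Z*c5%:Z + a5%:Z*c4%:Z
      + a5%:Z*c6%:Z + a6%:Z*c5%:Z + a6%:Z*c7%:Z + a7%:Z*c6%:Z + a2%:Z*c4%:Z + a4%:Z*c2%:Z))%R.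
Proof.
rewrite /lamF /coef /mkL7 /= !ffunE /= /cartan /=.
rewrite !inordK //= !NegzE; ring.
Qed.

Lemma nonneg_mk (b : Lam) : (forall i : 'I_7, (0 <= b i)%R) ->
  b = mkL7 `|b (inord 0)|%N `|b (inord 1)|%N `|b (inord 2)|%N `|b (inord 3)|%N
           `|b (inord 4)|%N `|b (inord 5)|%N `|b (inord 6)|%N.
Proof.
move=> H; apply/ffunP => k; rewrite ffunE.
rewrite -[k]inord_val; have := ltn_ord k; move: (nat_of_ord k) => n.
do 7! (case: n => [_|n]; first by rewrite inordK //=; match goal with |- _ ?i = _ => have := H i end; lia).
by [].
Qed.
Lemma sqz (h : int) : (0 <= h * h)%R. Proof. nia. Qed.
Lemma bnd1 (a1 a2 a3 a4 a5 a6 a7 : nat) : ((2 * (a1%:Z*a1%:Z + a2%:Z*a2%:Z + a3%:Z*a3%:Z + a4%:Z*a4%:Z + a5%:Z*a5%:Z + a6%:Z*a6%:Z + a7%:Z*a7%:Z) - (a1%:Z*a3%:Z + a3%:Z*a1%:Z + a3%:Z*a4%:Z + a4%:Z*a3%:Z + a4%:Z*a5%:Z + a5%:Z*a4%:Z + a5%:Z*a6%:Z + a6%:Z*a5%:Z + a6%:Z*a7%:Z + a7%:Z*a6%:Z + a2%:Z*a4%:Z + a4%:Z*a2%:Z))%R = 2%:Z :> int)%R -> (a1 <= 2)%N.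
Proof. move=> H; move: (sqz (2%:Z * a2%:Z + - (1)%:Z * a4%:Z)%R) (sqz (2%:Z * a3%:Z + - (1)%:Z * a1%:Z + - (1)%:Z * a4%:Z)%R) (sqz (2%:Z * a4%:Z + - (1)%:Z * a1%:Z + - (2)%:Z * a5%:Z)%R) (sqz (2%:Z * a5%:Z + - (1)%:Z * a1%:Z + - (2)%:Z * a6%:Z)%R) (sqz (2%:Z * a6%:Z + - (1)%:Z * a1%:Z + - (2)%:Z * a7%:Z)%R) (sqz (2%:Z * a7%:Z + - (1)%:Z * a1%:Z)%R); nia. Qed.

Lemma bnd2 (a1 a2 a3 a4 a5 a6 a7 : nat) : ((2 * (a1%:Z*a1%:Z + a2%:Z*a2%:Z + a3%:Z*a3%:Z + a4%:Z*a4%:Z + a5%:Z*a5%:Z + a6%:Z*a6%:Z + a7%:Z*a7%:Z) - (a1%:Z*a3%:Z + a3%:Z*a1%:Z + a3%:Z*a4%:Z + a4%:Z*a3%:Z + a4%:Z*a5%:Z + a5%:Z*a4%:Z + a5%:Z*a6%:Z + a6%:Z*a5%:Z + a6%:Z*a7%:Z + a7%:Z*a6%:Z + a2%:Z*a4%:Z + a4%:Z*a2%:Z))%R = 2%:Z :> int)%R -> (a2 <= 2)%N.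
Proof. move=> H; move: (sqz (2%:Z * a1%:Z + - (1)%:Z * a3%:Z)%R) (sqz (3%:Z * a3%:Z + - (2)%:Z * a4%:Z)%R) (sqz (4%:Z * a4%:Z + - (3)%:Z * a2%:Z + - (3)%:Z * a5%:Z)%R) (sqz (5%:Z * a5%:Z + - (3)%:Z * a2%:Z + - (4)%:Z * a6%:Z)%R) (sqz (6%:Z * a6%:Z + - (3)%:Z * a2%:Z + - (5)%:Z * a7%:Z)%R) (sqz (7%:Z * a7%:Z + - (3)%:Z * a2%:Z)%R); nia. Qed.

Lemma bnd3 (a1 a2 a3 a4 a5 a6 a7 : nat) : ((2 * (a1%:Z*a1%:Z + a2%:Z*a2%:Z + a3%:Z*a3%:Z + a4%:Z*a4%:Z + a5%:Z*a5%:Z + a6%:Z*a6%:Z + a7%:Z*a7%:Z) - (a1%:Z*a3%:Z + a3%:Z*a1%:Z + a3%:Z*a4%:Z + a4%:Z*a3%:Z + a4%:Z*a5%:Z + a5%:Z*a4%:Z + a5%:Z*a6%:Z + a6%:Z*a5%:Z + a6%:Z*a7%:Z + a7%:Z*a6%:Z + a2%:Z*a4%:Z + a4%:Z*a2%:Z))%R = 2%:Z :> int)%R -> (a3 <= 3)%N.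
Proof. move=> H; move: (sqz (2%:Z * a1%:Z + - (1)%:Z * a3%:Z)%R) (sqz (2%:Z * a2%:Z + - (1)%:Z * a4%:Z)%R) (sqz (3%:Z * a4%:Z + - (2)%:Z * a3%:Z + - (2)%:Z * a5%:Z)%R) (sqz (4%:Z * a5%:Z + - (2)%:Z * a3%:Z + - (3)%:Z * a6%:Z)%R) (sqz (5%:Z * a6%:Z + - (2)%:Z * a3%:Z + - (4)%:Z * a7%:Z)%R) (sqz (3%:Z * a7%:Z + - (1)%:Z * a3%:Z)%R); nia. Qed.

Lemma bnd4 (a1 a2 a3 a4 a5 a6 a7 : nat) : ((2 * (a1%:Z*a1%:Z + a2%:Z*a2%:Z + a3%:Z*a3%:Z + a4%:Z*a4%:Z + a5%:Z*a5%:Z + a6%:Z*a6%:Z + a7%:Z*a7%:Z) - (a1%:Z*a3%:Z + a3%:Z*a1%:Z + a3%:Z*a4%:Z + a4%:Z*a3%:Z + a4%:Z*a5%:Z + a5%:Z*a4%:Z + a5%:Z*a6%:Z + a6%:Z*a5%:Z + a6%:Z*a7%:Z + a7%:Z*a6%:Z + a2%:Z*a4%:Z + a4%:Z*a2%:Z))%R = 2%:Z :> int)%R -> (a4 <= 4)%N.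
Proof. move=> H; move: (sqz (2%:Z * a1%:Z + - (1)%:Z * a3%:Z)%R) (sqz (2%:Z * a2%:Z + - (1)%:Z * a4%:Z)%R) (sqz (3%:Z * a3%:Z + - (2)%:Z * a4%:Z)%R) (sqz (2%:Z * a5%:Z + - (1)%:Z * a4%:Z + - (1)%:Z * a6%:Z)%R) (sqz (3%:Z * a6%:Z + - (1)%:Z * a4%:Z + - (2)%:Z * a7%:Z)%R) (sqz (4%:Z * a7%:Z + - (1)%:Z * a4%:Z)%R); nia. Qed.

Lemma bnd5 (a1 a2 a3 a4 a5 a6 a7 : nat) : ((2 * (a1%:Z*a1%:Z + a2%:Z*a2%:Z + a3%:Z*a3%:Z + a4%:Z*a4%:Z + a5%:Z*a5%:Z + a6%:Z*a6%:Z + a7%:Z*a7%:Z) - (a1%:Z*a3%:Z + a3%:Z*a1%:Z + a3%:Z*a4%:Z + a4%:Z*a3%:Z + a4%:Z*a5%:Z + a5%:Z*a4%:Z + a5%:Z*a6%:Z + a6%:Z*a5%:Z + a6%:Z*a7%:Z + a7%:Z*a6%:Z + a2%:Z*a4%:Z + a4%:Z*a2%:Z))%R = 2%:Z :> int)%R -> (a5 <= 3)%N.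
Proof. move=> H; move: (sqz (2%:Z * a1%:Z + - (1)%:Z * a3%:Z)%R) (sqz (2%:Z * a2%:Z + - (1)%:Z * a4%:Z)%R) (sqz (3%:Z * a3%:Z + - (2)%:Z * a4%:Z)%R) (sqz (5%:Z * a4%:Z + - (6)%:Z * a5%:Z)%R) (sqz (2%:Z * a6%:Z + - (1)%:Z * a5%:Z + - (1)%:Z * a7%:Z)%R) (sqz (3%:Z * a7%:Z + - (1)%:Z * a5%:Z)%R); nia. Qed.

Lemma bnd6 (a1 a2 a3 a4 a5 a6 a7 : nat) : ((2 * (a1%:Z*a1%:Z + a2%:Z*a2%:Z + a3%:Z*a3%:Z + a4%:Z*a4%:Z + a5%:Z*a5%:Z + a6%:Z*a6%:Z + a7%:Z*a7%:Z) - (a1%:Z*a3%:Z + a3%:Z*a1%:Z + a3%:Z*a4%:Z + a4%:Z*a3%:Z + a4%:Z*a5%:Z + a5%:Z*a4%:Z + a5%:Z*a6%:Z + a6%:Z*a5%:Z + a6%:Z*a7%:Z + a7%:Z*a6%:Z + a2%:Z*a4%:Z + a4%:Z*a2%:Z))%R = 2%:Z :> int)%R -> (a6 <= 2)%N.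
Proof. move=> H; move: (sqz (2%:Z * a1%:Z + - (1)%:Z * a3%:Z)%R) (sqz (2%:Z * a2%:Z + - (1)%:Z * a4%:Z)%R) (sqz (3%:Z * a3%:Z + - (2)%:Z * a4%:Z)%R) (sqz (5%:Z * a4%:Z + - (6)%:Z * a5%:Z)%R) (sqz (4%:Z * a5%:Z + - (5)%:Z * a6%:Z)%R) (sqz (2%:Z * a7%:Z + - (1)%:Z * a6%:Z)%R); nia. Qed.

Lemma bnd7 (a1 a2 a3 a4 a5 a6 a7 : nat) : ((2 * (a1%:Z*a1%:Z + a2%:Z*a2%:Z + a3%:Z*a3%:Z + a4%:Z*a4%:Z + a5%:Z*a5%:Z + a6%:Z*a6%:Z + a7%:Z*a7%:Z) - (a1%:Z*a3%:Z + a3%:Z*a1%:Z + a3%:Z*a4%:Z + a4%:Z*a3%:Z + a4%:Z*a5%:Z + a5%:Z*a4%:Z + a5%:Z*a6%:Z + a6%:Z*a5%:Z + a6%:Z*a7%:Z + a7%:Z*a6%:Z + a2%:Z*a4%:Z + a4%:Z*a2%:Z))%R = 2%:Z :> int)%R -> (a7 <= 1)%N.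
Proof. move=> H; move: (sqz (2%:Z * a1%:Z + - (1)%:Z * a3%:Z)%R) (sqz (2%:Z * a2%:Z + - (1)%:Z * a4%:Z)%R) (sqz (3%:Z * a3%:Z + - (2)%:Z * a4%:Z)%R) (sqz (5%:Z * a4%:Z + - (6)%:Z * a5%:Z)%R) (sqz (4%:Z * a5%:Z + - (5)%:Z * a6%:Z)%R) (sqz (3%:Z * a6%:Z + - (4)%:Z * a7%:Z)%R); nia. Qed.

Definition R : seq (seq nat) := [:: [:: 0; 0; 0; 0; 0; 0; 1]; [:: 0; 0; 0; 0; 0; 1; 0]; [:: 0; 0; 0; 0; 0; 1; 1]; [:: 0; 0; 0; 0; 1; 0; 0]; [:: 0; 0; 0; 0; 1; 1; 0]; [:: 0; 0; 0; 0; 1; 1; 1]; [:: 0; 0; 0; 1; 0; 0; 0]; [:: 0; 0; 0; 1; 1; 0; 0]; [:: 0; 0; 0; 1; 1; 1; 0]; [:: 0; 0; 0; 1; 1; 1; 1]; [:: 0; 0; 1; 0; 0; 0; 0]; [:: 0; 0; 1; 1; 0; 0; 0]; [:: 0; 0; 1; 1; 1; 0; 0]; [:: 0; 0; 1; 1; 1; 1; 0]; [:: 0; 0; 1; 1; 1; 1; 1]; [:: 0; 1; 0; 0; 0; 0; 0]; [:: 0; 1; 0; 1; 0; 0; 0]; [:: 0; 1; 0; 1; 1; 0; 0]; [:: 0; 1; 0; 1; 1; 1; 0]; [:: 0; 1; 0; 1; 1; 1; 1]; [:: 0; 1; 1; 1; 0; 0; 0]; [:: 0; 1; 1; 1; 1;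 0; 0]; [:: 0; 1; 1; 1; 1; 1; 0]; [:: 0; 1; 1; 1; 1; 1; 1]; [:: 0; 1; 1; 2; 1; 0; 0]; [:: 0; 1; 1; 2; 1; 1; 0]; [:: 0; 1; 1; 2; 1; 1; 1]; [:: 0; 1; 1; 2; 2; 1; 0]; [:: 0; 1; 1; 2; 2; 1; 1]; [:: 0; 1; 1; 2; 2; 2; 1]; [:: 1; 0; 0; 0; 0; 0; 0]; [:: 1; 0; 1; 0; 0; 0; 0]; [:: 1; 0; 1; 1; 0; 0; 0]; [:: 1; 0; 1; 1; 1; 0; 0]; [:: 1; 0; 1; 1; 1; 1; 0]; [:: 1; 0; 1; 1; 1; 1; 1]; [:: 1; 1; 1; 1; 0; 0; 0]; [:: 1; 1; 1; 1; 1; 0; 0]; [:: 1; 1; 1; 1; 1; 1; 0]; [:: 1; 1; 1; 1; 1; 1; 1]; [:: 1; 1; 1; 2; 1; 0; 0]; [:: 1; 1; 1; 2; 1; 1; 0]; [:: 1; 1; 1; 2; 1; 1; 1]; [:: 1; 1; 1; 2; 2; 1; 0]; [:: 1; 1; 1; 2; 2; 1; 1]; [:: 1; 1; 1; 2; 2; 2; 1]; [:: 1; 1; 2; 2; 1; 0; 0]; [:: 1; 1; 2; 2; 1; 1; 0]; [:: 1; 1; 2; 2; 1; 1; 1]; [:: 1; 1; 2; 2; 2; 1; 0]; [:: 1; 1; 2; 2; 2; 1; 1]; [:: 1; 1; 2; 2; 2; 2; 1]; [:: 1; 1; 2; 3; 2; 1; 0]; [:: 1; 1; 2; 3; 2;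 1; 1]; [:: 1; 1; 2; 3; 2; 2; 1]; [:: 1; 1; 2; 3; 3; 2; 1]; [:: 1; 2; 2; 3; 2; 1; 0]; [:: 1; 2; 2; 3; 2; 1; 1]; [:: 1; 2; 2; 3; 2; 2; 1]; [:: 1; 2; 2; 3; 3; 2; 1]; [:: 1; 2; 2; 4; 3; 2; 1]; [:: 1; 2; 3; 4; 3; 2; 1]; [:: 2; 2; 3; 4; 3; 2; 1]]%N.


Lemma coef_mk a1 a2 a3 a4 a5 a6 a7 i : (0 < i < 8)%N ->
  coef (mkL7 a1 a2 a3 a4 a5 a6 a7) i = Posz (nth 0%N [:: a1; a2; a3; a4; a5; a6; a7] i.-1).
Proof. by move=> /andP[h1 h2]; rewrite /coef ffunE inordK //; case: i h1 h2. Qed.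

Definition xi (x : seq nat) (i : nat) : nat := nth 0%N x i.-1.

Definition qA (x y : seq nat) : nat :=
  (2 * (xi x 1 * xi y 1 + xi x 2 * xi y 2 + xi x 3 * xi y 3 + xi x 4 * xi y 4 + xi x 5 * xi y 5
        + xi x 6 * xi y 6 + xi x 7 * xi y 7))%N.
Definition qB (x y : seq nat) : nat :=
  (xi x 1 * xi y 3 + xi x 3 * xi y 1 + xi x 3 * xi y 4 + xi x 4 * xi y 3 + xi x 4 * xi y 5
   + xi x 5 * xi y 4 + xi x 5 * xi y 6 + xi x 6 * xi y 5 + xi x 6 * xi y 7 + xi x 7 * xi y 6
   + xi x 2 * xi y 4 + xi x 4 * xi y 2)%N.

Lemma lamF_mk a1 a2 a3 a4 a5 a6 a7 c1 c2 c3 c4 c5 c6 c7 :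
  lamF (mkL7 a1 a2 a3 a4 a5 a6 a7) (mkL7 c1 c2 c3 c4 c5 c6 c7) =
  (Posz (qA [:: a1; a2; a3; a4; a5; a6; a7] [:: c1; c2; c3; c4; c5; c6; c7])
   - Posz (qB [:: a1; a2; a3; a4; a5; a6; a7] [:: c1; c2; c3; c4; c5; c6; c7]))%R.
Proof. rewrite lamF7 /qA /qB /xi /=; lia. Qed.

Definition mmaxS (x : seq nat) : nat :=
  foldr (fun i acc => if xi x i != 0%N then maxn i acc else acc) 0%N (iota 1 7).

Lemma mmax_mk a1 a2 a3 a4 a5 a6 a7 :
  mmax (mkL7 a1 a2 a3 a4 a5 a6 a7) = mmaxS [:: a1; a2; a3; a4; a5; a6; a7].
Proof. by rewrite mmaxE /mmaxF /mmaxS /= !coef_mk. Qed.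

Definition fmapS (x : seq nat) : V :=
  foldr (fun i acc => Vadd (if odd (xi x i) then f_simple i else Vzero) acc) Vzero (iota 1 7).

Lemma fmap_mk a1 a2 a3 a4 a5 a6 a7 :
  fmap (mkL7 a1 a2 a3 a4 a5 a6 a7) = fmapS [:: a1; a2; a3; a4; a5; a6; a7].
Proof. by rewrite /fmap /fmapS /= !coef_mk. Qed.

Definition boxcheck : bool :=
  all (fun a1 => all (fun a2 => all (fun a3 => all (fun a4 => all (fun a5 => all (fun a6 => all (fun a7 =>
   let x := [:: a1; a2; a3; a4; a5; a6; a7] in (qA x x == 2 + qB x x)%N ==> (x \in R))
   (iota 0 2)) (iota 0 3)) (iota 0 4)) (iota 0 5)) (iota 0 4)) (iota 0 3)) (iota 0 3).

Lemma boxcheck_ok : boxcheck = true. Proof. by vm_compute. Qed.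

Lemma inR a1 a2 a3 a4 a5 a6 a7 :
  lamF (mkL7 a1 a2 a3 a4 a5 a6 a7) (mkL7 a1 a2 a3 a4 a5 a6 a7) = (2%:Z)%R ->
  [:: a1; a2; a3; a4; a5; a6; a7] \in R.
Proof.
move=> H; have H' := H; rewrite lamF7 in H'.
have b1 := @bnd1 _ _ _ _ _ _ _ H'; have b2 := @bnd2 _ _ _ _ _ _ _ H'; have b3 := @bnd3 _ _ _ _ _ _ _ H'; have b4 := @bnd4 _ _ _ _ _ _ _ H';
have b5 := @bnd5 _ _ _ _ _ _ _ H'; have b6 := @bnd6 _ _ _ _ _ _ _ H'; have b7 := @bnd7 _ _ _ _ _ _ _ H'.
rewrite lamF_mk in H.
move: boxcheck_ok.
move=> /allP/(_ a1); rewrite mem_iota add0n ltnS b1 => /(_ isT).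
move=> /allP/(_ a2); rewrite mem_iota add0n ltnS b2 => /(_ isT).
move=> /allP/(_ a3); rewrite mem_iota add0n ltnS b3 => /(_ isT).
move=> /allP/(_ a4); rewrite mem_iota add0n ltnS b4 => /(_ isT).
move=> /allP/(_ a5); rewrite mem_iota add0n ltnS b5 => /(_ isT).
move=> /allP/(_ a6); rewrite mem_iota add0n ltnS b6 => /(_ isT).
move=> /allP/(_ a7); rewrite mem_iota add0n ltnS b7 => /(_ isT).
move=> /implyP; apply; apply/eqP; lia.
Qed.

Definition stB (s : nat) (x : seq nat) : bool :=
  if s == 1%N then false
  else if s == 3%N then (mmaxS x == 2%N) || (mmaxS x == 3%N)
  else mmaxS x == s.

Definition pairP (x y : seq nat) : bool :=
  all (fun s => [&& stB s x, stB s y & x != y] ==>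
     ((Vform (fmapS x) (fmapS y) == 0%N) == (agree_count (fmapS x) (fmapS y) == 1%N)) &&
     ((qA x y == qB x y) == (agree_count (fmapS x) (fmapS y) == 1%N)))
   [:: 1; 3; 4; 5; 6; 7]%N.

Lemma pairs_ok : all (fun x => all (pairP x) R) R = true. Proof. by vm_compute. Qed.

Lemma ex_mk (b : Lam) : (forall i : 'I_7, (0 <= b i)%R) ->
  exists a1 a2 a3 a4 a5 a6 a7, b = mkL7 a1 a2 a3 a4 a5 a6 a7.
Proof. move=> H; rewrite (@nonneg_mk _ H); do 7 eexists; reflexivity. Qed.

Theorem mainTheorem7 (s : nat) (b b' : Lam) :
  s \in [:: 1; 3; 4; 5; 6; 7]%N ->
  in_stratum s b -> in_stratum s b' -> b <> b' ->
  (Vform (fmap b) (fmap b') = 0%N <-> agree_count (fmap b) (fmap b') = 1%N) /\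
  (lam_form b b' = Posz 0 <-> agree_count (fmap b) (fmap b') = 1%N).
Proof.
move=> hs [[Hb Hbn] Sb] [[Hb' Hbn'] Sb'] ne.
case: (s =P 1%N) => [Es|/eqP s1].
  by move: Sb Sb'; rewrite Es /= => E1 E2; case: ne; rewrite E1 E2.
have [a1 [a2 [a3 [a4 [a5 [a6 [a7 Eb]]]]]]] := @ex_mk _ Hbn.
have [c1 [c2 [c3 [c4 [c5 [c6 [c7 Eb']]]]]]] := @ex_mk _ Hbn'.
subst b b'.
rewrite lam_formE in Hb; rewrite lam_formE in Hb'.
have Rx := @inR _ _ _ _ _ _ _ Hb; have Ry := @inR _ _ _ _ _ _ _ Hb'.
move: pairs_ok => /allP/(_ _ Rx)/allP/(_ _ Ry)/allP/(_ _ hs).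
rewrite (negbTE s1) !mmax_mk in Sb Sb'.
have Sx : stB s [:: a1; a2; a3; a4; a5; a6; a7] by rewrite /stB (negbTE s1).
have Sy : stB s [:: c1; c2; c3; c4; c5; c6; c7] by rewrite /stB (negbTE s1).
have nxy : [:: a1; a2; a3; a4; a5; a6; a7] != [:: c1; c2; c3; c4; c5; c6; c7].
  by apply/eqP => -[E1 E2 E3 E4 E5 E6 E7]; apply: ne; rewrite E1 E2 E3 E4 E5 E6 E7.
rewrite Sx Sy nxy /= => /andP[/eqP h1 /eqP h2].
rewrite lam_formE lamF_mk !fmap_mk; split; split.
- by move/eqP; rewrite h1 => /eqP.
- by move/eqP; rewrite -h1 => /eqP.
- move=> h; have e : qA [:: a1; a2; a3; a4; a5; a6; a7] [:: c1; c2; c3; c4; c5; c6; c7] = qB [:: a1; a2; a3; a4; a5; a6; a7] [:: c1; c2; c3; c4; c5; c6; c7] by lia.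
  by move/eqP: e; rewrite h2 => /eqP.
- move/eqP; rewrite -h2 => /eqP ->; by rewrite subrr.
Qed.
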